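(* Let $u_1,\dots,u_n\in\mathbb{R}^d$, $c_1,\dots,c_m\in\mathbb{R}^n_{\ge0}$, budgets $b_1,\dots,b_m$, and $\varepsilon>0$ with $b_j\ge\frac{d\|c_j\|_\infty}{\varepsilon}$ for all $1\le j\le m$. Let $x\in[0,1]^n$ be an optimal solution of the convex program: minimize $\operatorname{tr}((\sum_{i=1}^n x(i)u_iu_i^\top)^{-1})$ subject to $\langle c_j,x\rangle\le b_j$ ($1\le j\le m$), $0\le x(i)\le1$ ($1\le i\le n$). Let $X=\sum_i x(i)u_iu_i^\top$ (nonsingular) and $v_i=X^{-1/2}u_i$. Then for each $1\le i\le n$ with $0<x(i)<1$, \[ \langle X^{-1},v_iv_i^\top\rangle\le\frac{\varepsilon}{d}\operatorname{tr}(X^{-1}). \]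
   Context: $\langle M,N\rangle=\operatorname{tr}(MN)$ for symmetric matrices. *)

(* Defs.v *)
From HB Require Import structures.
From mathcomp Require Import all_boot all_order all_algebra.
From mathcomp Require Import reals.
Set Implicit Arguments. Unset Strict Implicit. Unset Printing Implicit Defensive.
Import Order.TTheory GRing.Theory Num.Theory.
Local Open Scope ring_scope.

Definition mx_inner (R : realType) (d : nat) (M N : 'M[R]_d) : R := \tr (M *m N).

Definition design_mx (R : realType) (d n : nat) (u : 'I_n -> 'cV[R]_d)
  (x : 'I_n -> R) : 'M[R]_d :=
  \sum_(i < n) x i *: (u i *m (u i)^T).

Definition vdot (R : realType) (n : nat) (c x : 'I_n -> R) : R :=
  \sum_(i < n) c i * x i.

Definition supnorm (R : realType) (n : nat) (c : 'I_n -> R) : R :=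
  \big[Num.max/0]_(i < n) `|c i|.

Definition feasible (R : realType) (n m : nat) (c : 'I_m -> 'I_n -> R)
  (b : 'I_m -> R) (x : 'I_n -> R) : Prop :=
  (forall j, vdot (c j) x <= b j) /\ (forall i, 0 <= x i <= 1).

(* x is an optimal solution of  min tr((sum_i x(i) u_i u_i^T)^{-1})
   subject to feasibility; the objective is +oo at singular designs. *)
Definition optimal (R : realType) (d n m : nat) (u : 'I_n -> 'cV[R]_d)
  (c : 'I_m -> 'I_n -> R) (b : 'I_m -> R) (x : 'I_n -> R) : Prop :=
  feasible c b x /\ design_mx u x \in unitmx /\
  forall y, feasible c b y -> design_mx u y \in unitmx ->
    \tr (invmx (design_mx u x)) <= \tr (invmx (design_mx u y)).

Definition psd (R : realType) (d : nat) (S : 'M[R]_d) : Prop :=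
  S^T = S /\ forall z : 'cV[R]_d, 0 <= ((z^T *m S *m z) 0 0).

Definition is_psd_sqrt (R : realType) (d : nat) (A S : 'M[R]_d) : Prop :=
  psd S /\ S *m S = A.

(* Main.v *)
Require Import Defs.
From HB Require Import structures.
From mathcomp Require Import all_boot all_order all_algebra.
From mathcomp Require Import reals ring lra.
Import Order.TTheory GRing.Theory Num.Theory.
Local Open Scope ring_scope.

Lemma SM (R : realType) (d : nat) (X Xi P : 'M[R]_d) (a t h : R) :
  X *m Xi = 1%:M -> P *m Xi *m P = h *: P -> a != 0 -> a + t * h != 0 ->
  (a *: X + t *: P) *m (a^-1 *: Xi - (t / (a * (a + t * h))) *: (Xi *m P *m Xi)) = 1%:M.
Proof.
move=> XXi PXP a0 ath0.
rewrite mulmxDl !mulmxBr -!scalemxAl -!scalemxAr !scalerA !mulmxA XXi mul1mx PXP.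
rewrite -!scalemxAl !scalerA mulfV // scale1r -addrA.
set Z := P *m Xi.
rewrite -scaleNr -scalerBl -scalerDl.
have -> : (- (a * (t / (a * (a + t * h)))) + (t * a^-1 - t * (t / (a * (a + t * h))) * h)) = 0.
  by field; apply/andP; split.
by rewrite scale0r addr0.
Qed.

Theorem lemma4p16 (R : realType) (d n m : nat) (u : 'I_n -> 'cV[R]_d)
  (c : 'I_m -> 'I_n -> R) (b : 'I_m -> R) (eps : R) (x : 'I_n -> R)
  (Xhalfinv : 'M[R]_d) :
  0 < eps ->
  (forall j i, 0 <= c j i) ->
  (forall j, d%:R * supnorm (c j) / eps <= b j) ->
  optimal u c b x ->
  is_psd_sqrt (invmx (design_mx u x)) Xhalfinv ->
  forall i : 'I_n, 0 < x i < 1 ->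
    let v := Xhalfinv *m u i in
    mx_inner (invmx (design_mx u x)) (v *m v^T)
      <= eps / d%:R * \tr (invmx (design_mx u x)).
Proof.
move=> eps0 c0 hb [[feasc feasx] [Xu opt]] [[ST Spsd] SS] i /andP[xi0 xi1]; cbv zeta; set v := Xhalfinv *m u i.
have [d0|dn0] := eqVneq d 0%N.
  subst d; by rewrite /mx_inner /mxtrace !big_ord0 mulr0.
have dpos : 0 < d%:R :> R by rewrite ltr0n lt0n.
set X := design_mx u x in opt Xu SS *.
set Xi := invmx X in SS *.
set S := Xhalfinv in ST SS v *.
set P := u i *m (u i)^T.
set g := \tr (Xi *m Xi *m P).
set h := ((u i)^T *m Xi *m u i) 0 0.
set T := \tr Xi.
have LHS : mx_inner Xi (v *m v^T) = g.
  rewrite /mx_inner /v /g /P trmx_mul ST !mulmxA mxtrace_mulC !mulmxA -SS !mulmxA.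
  done.
rewrite LHS.
have h0 : 0 <= h.
  rewrite /h -SS.
  have -> : (u i)^T *m (S *m S) *m u i = (S *m u i)^T *m (S *m u i).
    by rewrite trmx_mul ST !mulmxA.
  rewrite mxE; apply: sumr_ge0 => j _; rewrite mxE -expr2; exact: sqr_ge0.
have PXP : P *m Xi *m P = h *: P.
  have -> : P *m Xi *m P = u i *m ((u i)^T *m Xi *m u i) *m (u i)^T.
    by rewrite /P !mulmxA.
  by rewrite [X in u i *m X *m _]mx11_scalar mul_mx_scalar -scalemxAl.
have XXi : X *m Xi = 1%:M by exact: mulmxV.
rewrite leNgt; apply/negP => Hlt.

set k := d%:R / eps.
have kpos : 0 < k by rewrite /k divr_gt0.
have Tkg : T < k * g.
  rewrite (_ : T = k * (eps / d%:R * T)); last first.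
    by rewrite /k; field; apply/andP; split; rewrite lt0r_neq0.
  by rewrite ltr_pM2l.
set del := k * g - T.
have delpos : 0 < del by rewrite /del subr_gt0.
set C := `|T * k * h - T| + 1.
have Cpos : 0 < C by rewrite /C ltr_pwDr.
set s := Num.min (1/2) (Num.min ((1 - x i) / k) (del / (2 * C))).
have spos : 0 < s.
  rewrite /s !lt_min; apply/and3P; split.
  - by rewrite divr_gt0.
  - by rewrite divr_gt0 // subr_gt0.
  - by rewrite divr_gt0 // mulr_gt0.
have shalf : s <= 1/2 by rewrite /s ge_min lexx.
have sk : s * k <= 1 - x i.
  by rewrite -ler_pdivlMr // /s ge_min [X in _ || X]ge_min lexx orbT.
have sC : s * (2 * C) <= del.
  by rewrite -ler_pdivlMr ?mulr_gt0 // /s ge_min [X in _ || X]ge_min lexx !orbT.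

set y := fun l => (1 - s) * x l + (if l == i then s * k else 0).
have sum_ind : forall (V : zmodType) (t : R) (F : 'I_n -> V) (sc : R -> V -> V),
    (forall z, sc 0 z = 0) ->
    \sum_(l < n) sc (if l == i then t else 0) (F l) = sc t (F i).
  move=> V t F sc sc0; rewrite (bigD1 i) //= eqxx big1 ?addr0 //.
  by move=> l /negbTE ->; rewrite sc0.
have feasy : feasible c b y.
  split.
    move=> j; rewrite /vdot /y.
    under eq_bigr do rewrite mulrDr.
    rewrite big_split /=.
    rewrite (sum_ind R (s * k) (c j) (fun t z => z * t)); last by move=> z; rewrite mulr0.
    have e1 : \sum_(l < n) c j l * ((1 - s) * x l) = (1 - s) * vdot (c j) x.
      by rewrite /vdot mulr_sumr; apply: eq_bigr => l _; rewrite mulrCA.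
    rewrite e1.
    have cN : c j i <= supnorm (c j).
      rewrite /supnorm -[c j i]ger0_norm //.
      exact: (le_bigmax 0 (fun l => `|c j l|) i).
    have hbj := hb j.
    have kN : k * supnorm (c j) <= b j by move: hbj; rewrite /k mulrAC.
    have a1 : (1 - s) * vdot (c j) x <= (1 - s) * b j.
      by rewrite ler_wpM2l ?feasc // subr_ge0; apply: le_trans shalf _; lra.
    have a2 : c j i * (s * k) <= supnorm (c j) * (s * k).
      by rewrite ler_wpM2r // mulr_ge0 // ltW.
    have a3 : s * (k * supnorm (c j)) <= s * b j by rewrite ler_wpM2l // ltW.
    lra.
  move=> l; rewrite /y; have /andP[xl0 xl1] := feasx l.
  have b1 : 0 <= s * x l by rewrite mulr_ge0 // ltW.
  have b2 : 0 <= s * k by rewrite mulr_ge0 // ltW.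
  have c1 : 0 <= (1 - s) * x l by rewrite mulr_ge0 // subr_ge0; lra.
  move: c1 b1 xl0 xl1; case: eqP => [->|_] c1 b1 xl0 xl1.
    apply/andP; split; lra.
  apply/andP; split; lra.

set a := 1 - s.
set t := s * k.
have apos : 0 < a by rewrite /a subr_gt0; lra.
have tpos : 0 < t by rewrite /t mulr_gt0.
have athpos : 0 < a + t * h by rewrite ltr_pwDl // mulr_ge0 // ltW.
have Ydef : design_mx u y = a *: X + t *: P.
  rewrite /design_mx /y /X /design_mx.
  under eq_bigr do rewrite scalerDl -scalerA.
  rewrite big_split /= -scaler_sumr.
  by rewrite (sum_ind _ t (fun l => u l *m (u l)^T) (fun r z => r *: z)) // => z; rewrite scale0r.
set w := t / (a * (a + t * h)).
set M := a^-1 *: Xi - w *: (Xi *m P *m Xi).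
have YM : design_mx u y *m M = 1%:M.
  by rewrite Ydef; apply: SM => //; rewrite lt0r_neq0.
have [Yu _] := mulmx1_unit YM.
have invY : invmx (design_mx u y) = M.
  by rewrite -[invmx _]mulmx1 -YM mulmxA mulVmx // mul1mx.
have H := opt y feasy Yu.
rewrite invY /M raddfB /= !mxtraceZ -/T in H.
have trg : \tr (Xi *m P *m Xi) = g by rewrite mxtrace_mulC /g !mulmxA.
rewrite trg in H.
have H2 : T * (a * (a + t * h)) <= T * (a + t * h) - t * g.
  have -> : T * (a + t * h) - t * g = (a^-1 * T - w * g) * (a * (a + t * h)).
    by rewrite /w; field; apply/andP; split; rewrite lt0r_neq0.
  by rewrite ler_pM2r // mulr_gt0.
have key : s * (k * g - T * (1 - s + s * k * h)) <= 0.
  have -> : s * (k * g - T * (1 - s + s * k * h)) =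
            T * (a * (a + t * h)) - (T * (a + t * h) - t * g) by rewrite /a /t; ring.
  by rewrite subr_le0.
rewrite pmulr_rle0 // in key.
have e3 : T * (1 - s + s * k * h) = T + s * (T * k * h - T) by ring.
rewrite e3 in key.
have e4 : s * (T * k * h - T) <= s * C.
  rewrite ler_wpM2l ?(ltW spos) // /C; have := ler_norm (T * k * h - T); lra.
rewrite /del in sC delpos.
lra.
Qed.
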